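(* Let $e_1\oplus e_2$ be a subexpression of the clique-width $k$-expression $e_G$ and let $C,N\in[0,\mathcal{N}]^{k\times q}$. Let $N_1\in[0,\mathcal{N}]^{k\times q}$ be defined by $N_1[i,a]=0$ for every $i\in\overline{\ell(e_1)}$ and every color $a$, and $N_1[i,a]=N[i,a]$ for every $i\notin\overline{\ell(e_1)}$ and every color $a$; define $N_2$ analogously with respect to $e_2$. Then $\lambda(e_1\oplus e_2,C,N)$ equals the minimum of $\lambda(e_1,C_1,N_1)\circledast\lambda(e_2,C_2,N_2)$ over all $C_1,C_2\in[0,\mathcal{N}]^{k\times q}$ such that $C_1[i,a]=0$ for all $i\in\overline{\ell(e_1)}$ and all $a$, $C_2[i,a]=0$ for all $i\in\overline{\ell(e_2)}$ and all $a$, and $C[i,a]=\min(\mathcal{N},C_1[i,a]+C_2[i,a])$ for all $i\in[1,k]$ and all $a\in\mathrm{Colors}$.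
   Context: Weight set: $(\mathrm{Weights},\preceq,\circledast)$ where $\preceq$ is a total order with a maximum element $\mathrm{Error}$, $\min$ is the minimum w.r.t. $\preceq$ (minimum of an empty set is $\mathrm{Error}$), and $\circledast$ is commutative, associative, has a neutral element, has absorbing element $\mathrm{Error}$, and satisfies $s_1\preceq s_2\Rightarrow s_1\circledast s_3\preceq s_2\circledast s_3$. A color-counting 1-locally checkable problem is given by a graph $G$, colors $\mathrm{Colors}=\{a_1,\ldots,a_q\}$, nonempty lists $L_v\subseteq\mathrm{Colors}$, weights $w_{v,a}\in\mathrm{Weights}\setminus\{\mathrm{Error}\}$ ($a\in L_v$), and a function $check(v,a,n_1,\ldots,n_q)\in\{\mathrm{True},\mathrm{False}\}$. $\mathcal{N}\in[1,|V(G)|]$ is an integer with $check(v,a,n_1,\ldots,n_q)=check(v,a,\min(\mathcal{N},n_1),\ldots,\min(\mathcal{N},n_q))$ always. $[x,y]=\{x,\ldots,y\}$. $e_G$ is an irredundant clique-width $k$-expression of $G$ (operations $i(v)$, $\oplus$, $\eta_{i,j}$, $\rho_{i\to j}$; irredundant means no join adds an already existing edge), in which every relabeling $\rho_{i\to j}(e)$ has some vertex of $G_e$ of label $j$. For a subexpression $e$, $G_e$ is its labeled graph, $\ell_e(v)$ the label of $v$ in $G_e$, and $\overline{\ell(e)}$ the set of labels in $[1,k]$ carried by no vertex of $G_e$. For $C,N\in[0,\mathcal{N}]^{k\times q}$ (rows = labels, columns = colors), a coloring $c$ of $G_e$ with $c(v)\in L_v$ for all $v$ is a $(C,N)$-coloring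 of $G_e$ if (C1) $\min(\mathcal{N},|\{v\in V(G_e): c(v)=a,\ \ell_e(v)=i\}|)=C[i,a]$ for all $i,a$; and (C2) for all $v\in V(G_e)$, $check(v,c(v),n_1,\ldots,n_q)$ holds with $n_j=\min(\mathcal{N},N[\ell_e(v),a_j]+|\{u\in N_{G_e}(v):c(u)=a_j\}|)$. $\lambda(e,C,N)$ is the minimum of $\circledast_{v\in V(G_e)}w_{v,c(v)}$ over all $(C,N)$-colorings $c$ of $G_e$ ($\mathrm{Error}$ if none). *)

(* Defs.v *)
From HB Require Import structures.
From mathcomp Require Import all_boot all_order.
Set Implicit Arguments. Unset Strict Implicit. Unset Printing Implicit Defensive.
Import Order.TTheory.
Local Open Scope order_scope.

(* (Weights, <=, op): W is a totally ordered type with a top element \top,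
   which plays the role of Error. *)
Record weight_struct (d : Order.disp_t) (W : tOrderType d) := WeightStruct {
  wop : W -> W -> W;
  wid : W;
  wopC : commutative wop;
  wopA : associative wop;
  wop1 : left_id wid wop;
  wopT : left_zero \top wop;
  wop_le : forall s1 s2 s3 : W, s1 <= s2 -> wop s1 s3 <= wop s2 s3
}.

Inductive cwexpr (k : nat) (V : Type) :=
| CVert of 'I_k & V
| CUnion of cwexpr k V & cwexpr k V
| CJoin of 'I_k & 'I_k & cwexpr k V
| CRelab of 'I_k & 'I_k & cwexpr k V.

Section CW.
Variables (k : nat) (V : eqType).
Implicit Types e : cwexpr k V.

Fixpoint verts e : seq V :=
  match e with
  | CVert _ v => [:: v]
  | CUnion e1 e2 => verts e1 ++ verts e2
  | CJoin _ _ e' => verts e'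
  | CRelab _ _ e' => verts e'
  end.

(* label l_e(v) of a vertex v of G_e (meaningless for v outside G_e) *)
Fixpoint lab e (u : V) : 'I_k :=
  match e with
  | CVert i _ => i
  | CUnion e1 e2 => if u \in verts e1 then lab e1 u else lab e2 u
  | CJoin _ _ e' => lab e' u
  | CRelab i j e' => if lab e' u == i then j else lab e' u
  end.

Fixpoint edge e (u v : V) : bool :=
  match e with
  | CVert _ _ => false
  | CUnion e1 e2 => edge e1 u v || edge e2 u v
  | CJoin i j e' =>
      edge e' u v ||
      [&& u \in verts e', v \in verts e' &
          ((lab e' u == i) && (lab e' v == j)) ||
          ((lab e' u == j) && (lab e' v == i))]
  | CRelab _ _ e' => edge e' u v
  end.

(* \overline{l(e)} : labels carried by no vertex of G_e *)
Definition absent_labels e : pred 'I_k :=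
  [pred i | all (fun v => lab e v != i) (verts e)].

Fixpoint subexpr (f e : cwexpr k V) : Prop :=
  f = e \/
  match e with
  | CVert _ _ => False
  | CUnion e1 e2 => subexpr f e1 \/ subexpr f e2
  | CJoin _ _ e' => subexpr f e'
  | CRelab _ _ e' => subexpr f e'
  end.

Definition node_ok (f : cwexpr k V) : Prop :=
  match f with
  | CJoin i j e' =>
      i != j /\
      (forall u v, u \in verts e' -> v \in verts e' ->
         lab e' u = i -> lab e' v = j -> ~~ edge e' u v)
  | CRelab i j e' => exists2 v, v \in verts e' & lab e' v = j
  | _ => True
  end.
End CW.

(* e is an irredundant clique-width k-expression of the graph G whose
   vertex set is the finite type V (G is then the graph G_e) in which every
   relabeling rho_{i->j}(e') has a vertex of label j in G_{e'} *)
Definition good_expr (k : nat) (V : finType) (e : cwexpr k V) : Prop :=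
  uniq (verts e) /\ (forall v : V, v \in verts e) /\
  (forall f, subexpr f e -> node_ok f).

Definition cmat (k q Nn : nat) := {ffun 'I_k * 'I_q -> 'I_Nn.+1}.

Section Lambda.
Variables (k q Nn : nat) (V : finType).
Variables (L : V -> {set 'I_q})
          (check : V -> 'I_q -> ('I_q -> nat) -> bool).

Definition is_CN_coloring (e : cwexpr k V) (C N : cmat k q Nn)
    (c : {ffun V -> 'I_q}) : bool :=
  [&& all (fun v => c v \in L v) (verts e),
      [forall i : 'I_k, forall a : 'I_q,
         (C (i, a) : nat) ==
         minn Nn (count (fun v => (c v == a) && (lab e v == i)) (verts e))] &
      all (fun v => check v (c v)
             (fun a => minn Nn (N (lab e v, a) +
                 count (fun u => edge e v u && (c u == a)) (verts e))))
          (verts e)].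

Variables (d : Order.disp_t) (W : tOrderType d) (ws : weight_struct W)
          (w : V -> 'I_q -> W).

Definition col_weight (e : cwexpr k V) (c : {ffun V -> 'I_q}) : W :=
  \big[(wop ws)/(wid ws)]_(v <- verts e) w v (c v).

(* lambda(e, C, N); colorings are represented by total functions on V,
   only their restriction to V(G_e) matters. *)
Definition lambda (e : cwexpr k V) (C N : cmat k q Nn) : W :=
  \big[Order.min/(\top)]_(c : {ffun V -> 'I_q} | is_CN_coloring e C N c)
     col_weight e c.
End Lambda.

Definition restrict_mat (k q Nn : nat) (V : eqType) (e : cwexpr k V)
    (N : cmat k q Nn) : cmat k q Nn :=
  [ffun p => if p.1 \in absent_labels e then ord0 else N p].

(* Main.v *)
Require Import Defs.
From HB Require Import structures.
From mathcomp Require Import all_boot all_order zify.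
From Stdlib Require Import FunctionalExtensionality.
Import Order.TTheory.
Local Open Scope order_scope.
Set Implicit Arguments. Unset Strict Implicit.

Lemma minn_sat (n x y : nat) : minn n (minn n x + minn n y) = minn n (x + y).
Proof. lia. Qed.

Section H.
Variables (k : nat) (V : eqType).

Lemma edge_verts (e : cwexpr k V) u v : edge e u v -> (u \in verts e) && (v \in verts e).
Proof.
elim: e u v => [i x|e1 IH1 e2 IH2|i j e IH|i j e IH] u v //=.
- by case/orP => [/IH1|/IH2] /andP[Hu Hv]; rewrite !mem_cat ?Hu ?Hv ?orbT.
- by case/orP => [/IH //|/and3P[-> -> _]].
- exact: IH.
Qed.

Lemma subexpr_uniq (f e : cwexpr k V) : subexpr f e -> uniq (verts e) -> uniq (verts f).
Proof.
elim: e => [i x|e1 IH1 e2 IH2|i j e IH|i j e IH] /=.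
- by case=> // ->.
- case=> [-> //|[/IH1 H|/IH2 H]]; rewrite cat_uniq => /and3P[u1 _ u2]; auto.
- by case=> [-> //|/IH].
- by case=> [-> //|/IH].
Qed.

Lemma not_absent (e : cwexpr k V) v : v \in verts e -> lab e v \notin absent_labels e.
Proof. move=> Hv; rewrite /absent_labels inE; apply/allPn; exists v => //; by rewrite eqxx. Qed.
End H.

Section W.
Variables (d : Order.disp_t) (W : tOrderType d) (ws : weight_struct W).

Lemma wop_le2 (a a' b b' : W) : a <= a' -> b <= b' -> wop ws a b <= wop ws a' b'.
Proof.
move=> H1 H2; apply: le_trans (wop_le ws b H1) _.
rewrite (wopC ws a') (wopC ws a'); exact: wop_le.
Qed.

Lemma wop_bigminl (I : finType) (P : pred I) (F : I -> W) y :
  wop ws (\big[Order.min/(\top)]_(i | P i) F i) y = \big[Order.min/(\top)]_(i | P i) wop ws (F i) y.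
Proof.
apply: (big_morph (fun x => wop ws x y)).
- move=> a b /=; case: (leP a b) => Hab.
  + by rewrite (min_idPl (wop_le ws y Hab)).
  + by rewrite (min_idPr (wop_le ws y (ltW Hab))).
- exact: wopT.
Qed.
Lemma wbig_cat (I : Type) (s1 s2 : seq I) (F : I -> W) :
  \big[wop ws/wid ws]_(i <- s1 ++ s2) F i =
  wop ws (\big[wop ws/wid ws]_(i <- s1) F i) (\big[wop ws/wid ws]_(i <- s2) F i).
Proof.
elim: s1 => [|x s IH] /=; first by rewrite big_nil wop1.
by rewrite !big_cons IH wopA.
Qed.
End W.
Section Lam.
Variables (k q Nn : nat) (V : finType).
Variables (L : V -> {set 'I_q})
          (check : V -> 'I_q -> ('I_q -> nat) -> bool).
Implicit Types (e : cwexpr k V) (c : {ffun V -> 'I_q}).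

Definition cnt e c i a := count (fun v => (c v == a) && (lab e v == i)) (verts e).
Definition checkall e (N : cmat k q Nn) c :=
  all (fun v => check v (c v)
             (fun a => minn Nn (N (lab e v, a) +
                 count (fun u => edge e v u && (c u == a)) (verts e))))
          (verts e).

Lemma isCN_ext e (C N : cmat k q Nn) c c' : {in verts e, c =1 c'} ->
  is_CN_coloring L check e C N c = is_CN_coloring L check e C N c'.
Proof.
move=> H; rewrite /is_CN_coloring.
congr [&& _, _ & _].
- by apply: eq_in_all => v Hv; rewrite H.
- apply: eq_forallb => i; apply: eq_forallb => a; congr (_ == minn _ _).
  by apply: eq_in_count => v Hv; rewrite H.
- apply: eq_in_all => v Hv /=; rewrite H //; congr (check _ _ _).
  apply: functional_extensionality => a; congr (minn _ (_ + _)).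
  by apply: eq_in_count => u Hu; rewrite H.
Qed.

Lemma cnt_absent e c i a : i \in absent_labels e -> cnt e c i a = 0%N.
Proof.
rewrite /absent_labels inE => /allP H.
rewrite /cnt (eq_in_count (a2:=pred0)) ?count_pred0 // => v Hv /=.
by rewrite (negbTE (H v Hv)) andbF.
Qed.

Definition Cm e c : cmat k q Nn :=
  [ffun p => inord (minn Nn (cnt e c p.1 p.2))].

Lemma CmE e c i a : (Cm e c (i, a) : nat) = minn Nn (cnt e c i a).
Proof. by rewrite ffunE inordK // ltnS geq_minl. Qed.

Section U.
Variables (e1 e2 : cwexpr k V).
Hypothesis Hu : uniq (verts e1 ++ verts e2).

Lemma disj {v} : v \in verts e1 -> v \in verts e2 -> False.
Proof.
move=> H1 H2; move: Hu; rewrite cat_uniq => /and3P[_ /hasPn H _].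
by move: (H v H2); rewrite H1.
Qed.

Lemma isCN_U (C N : cmat k q Nn) c : is_CN_coloring L check (CUnion e1 e2) C N c =
  [&& all (fun v => c v \in L v) (verts e1), all (fun v => c v \in L v) (verts e2),
      [forall i, forall a, (C (i,a) : nat) == minn Nn (cnt e1 c i a + cnt e2 c i a)],
      checkall e1 (restrict_mat e1 N) c & checkall e2 (restrict_mat e2 N) c].
Proof.
rewrite /is_CN_coloring /checkall /= !all_cat -!andbA.
congr [&& _, _, _, _ & _].
- apply: eq_forallb => i; apply: eq_forallb => a; congr (_ == minn _ _).
  rewrite /cnt count_cat; congr (_ + _)%N; apply: eq_in_count => v Hv /=.
  + by rewrite Hv.
  + have Hv1 : v \notin verts e1 by apply/negP => H; exact: (disj H Hv).
    by rewrite (negbTE Hv1).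
- apply: eq_in_all => v Hv /=; rewrite Hv; congr (check _ _ _).
  apply: functional_extensionality => a.
  rewrite /restrict_mat ffunE /= (negbTE (not_absent Hv)) count_cat.
  rewrite [count _ (verts e2)](eq_in_count (a2:=pred0)) ?count_pred0 ?addn0; last first.
    move=> u Hu2 /=; apply/negbTE; apply/negP => /andP[/orP[/edge_verts/andP[_ H]|/edge_verts/andP[H _]] _].
    + exact: (disj H Hu2).
    + exact: (disj Hv H).
  congr (minn _ (_ + _)); apply: eq_in_count => u Hu1 /=.
  case E: (edge e2 v u); last by rewrite orbF.
  by case: (disj Hv (proj1 (andP (edge_verts E)))).
- apply: eq_in_all => v Hv /=.
  have Hv1 : v \notin verts e1 by apply/negP => H; exact: (disj H Hv).
  rewrite (negbTE Hv1); congr (check _ _ _).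
  apply: functional_extensionality => a.
  rewrite /restrict_mat ffunE /= (negbTE (not_absent Hv)) count_cat.
  rewrite [count _ (verts e1)](eq_in_count (a2:=pred0)) ?count_pred0 ?add0n; last first.
    move=> u Hu1 /=; apply/negbTE; apply/negP => /andP[/orP[/edge_verts/andP[H _]|/edge_verts/andP[_ H]] _].
    + exact: (negP Hv1 H).
    + exact: (disj Hu1 H).
  congr (minn _ (_ + _)); apply: eq_in_count => u Hu2 /=.
  case E: (edge e1 v u) => //.
  by case: (negP Hv1 (proj1 (andP (edge_verts E)))).
Qed.
End U.
End Lam.

Theorem lemma3
  (d : Order.disp_t) (W : tOrderType d) (ws : weight_struct W)
  (k q : nat) (V : finType)
  (L : V -> {set 'I_q}) (w : V -> 'I_q -> W)
  (check : V -> 'I_q -> ('I_q -> nat) -> bool) (Nn : nat)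
  (eG : cwexpr k V) (e1 e2 : cwexpr k V) (C N : cmat k q Nn) :
  good_expr eG ->
  (forall v, L v != set0) ->
  (forall v a, a \in L v -> w v a != \top) ->
  (1 <= Nn <= #|V|)%N ->
  (forall v a (n : 'I_q -> nat),
      check v a n = check v a (fun j => minn Nn (n j))) ->
  subexpr (CUnion e1 e2) eG ->
  lambda L check ws w (CUnion e1 e2) C N =
  \big[Order.min/(\top)]_(CC : cmat k q Nn * cmat k q Nn |
        [forall i : 'I_k, (i \in absent_labels e1) ==>
                          [forall a : 'I_q, (CC.1 (i, a) : nat) == 0%N]] &&
        [forall i : 'I_k, (i \in absent_labels e2) ==>
                          [forall a : 'I_q, (CC.2 (i, a) : nat) == 0%N]] &&
        [forall i : 'I_k, forall a : 'I_q,
           (C (i, a) : nat) == minn Nn (CC.1 (i, a) + CC.2 (i, a))])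
    wop ws (lambda L check ws w e1 CC.1 (restrict_mat e1 N))
           (lambda L check ws w e2 CC.2 (restrict_mat e2 N)).
Proof.
move=> [HuG _] _ _ _ _ Hsub.
have Hu : uniq (verts e1 ++ verts e2) := subexpr_uniq Hsub HuG.
apply: le_anti; apply/andP; split.
- apply: le_bigmin => [|[C1 C2] /= /andP[/andP[P1 P2] P3]]; first exact: lex1.
  rewrite /lambda wop_bigminl.
  apply: le_bigmin => [|c1 Hc1]; first exact: lex1.
  rewrite wopC wop_bigminl.
  apply: le_bigmin => [|c2 Hc2]; first exact: lex1.
  rewrite wopC.
  pose c := [ffun v => if v \in verts e1 then c1 v else c2 v].
  have E1 : {in verts e1, c =1 c1} by move=> v Hv; rewrite ffunE Hv.
  have E2 : {in verts e2, c =1 c2}.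
    move=> v Hv; rewrite ffunE.
    have Hv1 : v \notin verts e1 by apply/negP => H; exact: (disj Hu H Hv).
    by rewrite (negbTE Hv1).
  have Hcw : col_weight ws w (CUnion e1 e2) c =
             wop ws (col_weight ws w e1 c1) (col_weight ws w e2 c2).
    rewrite /col_weight /= wbig_cat /=; congr (wop ws _ _); apply: eq_big_seq.
    + by move=> v /E1 ->.
    + by move=> v /E2 ->.
  rewrite -Hcw; apply: bigmin_le_cond.
  rewrite -(isCN_ext _ _ _ _ E1) in Hc1.
  rewrite -(isCN_ext _ _ _ _ E2) in Hc2.
  case/and3P: Hc1 => A1 /forallP F1 K1.
  case/and3P: Hc2 => A2 /forallP F2 K2.
  rewrite (isCN_U _ _ Hu) /checkall A1 A2 K1 K2 /= andbT.
  apply/forallP => i; apply/forallP => a.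
  move/forallP: P3 => /(_ i) /forallP /(_ a) /eqP ->.
  move: (F1 i) => /forallP /(_ a) /eqP ->.
  move: (F2 i) => /forallP /(_ a) /eqP ->.
  by rewrite minn_sat.
- apply: le_bigmin => [|c Hc]; first exact: lex1.
  rewrite (isCN_U _ _ Hu) in Hc.
  case/and5P: Hc => A1 A2 /forallP F K1 K2.
  have H1 : is_CN_coloring L check e1 (Cm Nn e1 c) (restrict_mat e1 N) c.
    rewrite /is_CN_coloring A1; move: K1; rewrite /checkall => ->; rewrite andbT /=.
    by apply/forallP => i; apply/forallP => a; rewrite CmE.
  have H2 : is_CN_coloring L check e2 (Cm Nn e2 c) (restrict_mat e2 N) c.
    rewrite /is_CN_coloring A2; move: K2; rewrite /checkall => ->; rewrite andbT /=.
    by apply/forallP => i; apply/forallP => a; rewrite CmE.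
  apply: le_trans (bigmin_le_cond _ (j := (Cm Nn e1 c, Cm Nn e2 c)) _ _) _.
    apply/andP; split; first (apply/andP; split).
    + apply/forallP => i; apply/implyP => Hi; apply/forallP => a.
      by rewrite /= CmE cnt_absent // minn0.
    + apply/forallP => i; apply/implyP => Hi; apply/forallP => a.
      by rewrite /= CmE cnt_absent // minn0.
    + apply/forallP => i; apply/forallP => a.
      by rewrite /= !CmE minn_sat; move/forallP: (F i) => /(_ a).
  rewrite /= /col_weight /= wbig_cat /=.
  apply: wop_le2.
  + exact: (bigmin_le_cond _ _ H1).
  + exact: (bigmin_le_cond _ _ H2).
Qed.
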